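(* Let $X=X_1\times\cdots\times X_n$ be finite, $S=\{1,\ldots,n\}$, and let $\varrho(\mathcal{C})\ge 0$ be given for every partition $\mathcal{C}$ of $S$. Then the recombination equation \[ \dot\omega_t=\sum_{\mathcal{A}\in\boldsymbol{P}(S)}\varrho(\mathcal{A})\big(\mathcal{R}_{\mathcal{A}}(\omega_t)-\omega_t\big) \] for a differentiable curve $(\omega_t)_{t\ge0}$ of probability measures on $X$ is the law of mass action of the chemical reaction network consisting of the reactions \[ \sum_{j=1}^{|\mathcal{C}|} x^{(j)} \xrightarrow{\ \varrho(\mathcal{C})/|\mathcal{C}|\ } \sum_{j=1}^{|\mathcal{C}|}\ \bigsqcup_{i=1}^{|\mathcal{C}|}\pi_{C_i}\big(x^{(i+j-1)}\big), \] one for every $\mathcal{C}=\{C_1,\ldots,C_{|\mathcal{C}|}\}\in\boldsymbol{P}(S)$ and every ordered tuple $(x^{(1)},\ldots,x^{(|\mathcal{C}|)})\in X^{|\mathcal{C}|}$ (indices read modulo $|\mathcal{C}|$). That is, the recombination equation is equivalent to \[ \dot{\omega}_t = \sum_{\mathcal{C} \in \boldsymbol{P}(S)} \sum_{x^{(1)},\ldots,x^{(|\mathcal{C}|)} \in X} \frac{\varrho(\mathcal{C})}{|\mathcal{C}|} \, \omega_t \big (x^{(1)} \big) \cdots \omega_t \big (x^{(|\mathcal{C}|)} \big) \sum_{j = 1}^{|\mathcal{C}|} \Big ( \bigsqcup_{i = 1}^{|\mathcal{C}|} \pi_{C_i} \big (x^{(i + j -1)} \big) - x^{(j)} \Big ).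 \]
   Context: $\boldsymbol{P}(S)$ is the set of partitions of $S$; blocks of a partition $\mathcal{C}$ are enumerated so that $C_1$ contains $1$ and, for $k\ge 2$, $C_k$ contains the smallest element not in $C_1\cup\cdots\cup C_{k-1}$. For $A\subseteq S$, $\pi_A:X\to\prod_{i\in A}X_i$ is the coordinate projection; for pairwise disjoint $U_1,\ldots,U_k$ and sequences $y^{(\ell)}$ indexed by $U_\ell$, $y^{(1)}\sqcup\cdots\sqcup y^{(k)}$ is the sequence indexed by $\bigcup U_\ell$ with entry $y^{(j)}_i$ at site $i\in U_j$. The recombinator is $\mathcal{R}_{\mathcal{A}}(\nu)=\bigotimes_{i=1}^{|\mathcal{A}|}\pi_{A_i}.\nu$ (product of push-forward marginals). Measures on the finite set $X$ are identified with vectors in $\mathbb{R}^X$, and each $x\in X$ with the point mass $\delta_x$ (basis vector); so sums of elements of $X$ are sums of vectors. A chemical reaction network on a finite species set $\mathcal{S}$ is a finite collection of reactions $r_1+\cdots+r_m\xrightarrow{\kappa}s_1+\cdots+s_m$ with $r_i,s_i\in\mathcal{S}$ and $\kappa\ge0$; its law of mass action is the ODE $\dot c_t=\sum \kappa\, c_t(r_1)\cdots c_t(r_m)\,(s_1+\cdots+s_m-r_1-\cdots-r_m)$, summed over all reactions, for the concentration vector $c_t\in\mathbb{R}^{\mathcal{S}}$. *)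

(* Defs.v *)
From HB Require Import structures.
From mathcomp Require Import all_boot all_order all_algebra.
From mathcomp Require Import all_classical all_reals all_analysis.
Set Implicit Arguments. Unset Strict Implicit. Unset Printing Implicit Defensive.
Import Order.TTheory GRing.Theory Num.Theory.
Local Open Scope ring_scope.

Section Recomb.
Variables (n : nat) (Xs : 'I_n -> finType).

(* X = X_1 x ... x X_n (sites 1..n are represented by 'I_n, i.e. 0..n-1). *)
Definition Xspace : finType := {dffun forall i : 'I_n, Xs i}.

Definition is_partition (C : {set {set 'I_n}}) : bool := finset.partition C [set: 'I_n].

(* Canonical enumeration C_1, C_2, ... of the blocks: ordered by their
   smallest element (C_1 contains the first site, C_k contains the smallest
   site not in C_1 u ... u C_{k-1}). *)
Definition blocks (C : {set {set 'I_n}}) : seq {set 'I_n} :=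
  [seq finset.pblock C i | i <- enum 'I_n & [forall j in finset.pblock C i, (i <= j)%N]].

(* 0-based index of the block containing site s *)
Definition bidx (C : {set {set 'I_n}}) (s : 'I_n) : nat := index (finset.pblock C s) (blocks C).

Definition nblocks (C : {set {set 'I_n}}) : nat := size (blocks C).

Lemma cyc_proof k (j : 'I_k) (m : nat) : ((m + j) %% k < k)%N.
Proof. by apply: ltn_pmod; apply: leq_ltn_trans (ltn_ord j). Qed.
Definition cyc k (j : 'I_k) (m : nat) : 'I_k := Ordinal (cyc_proof j m).

Variable R : realType.

Definition dirac_vec (y : Xspace) : Xspace -> R := fun z => (z == y)%:R.

(* recombinator: R_A(nu)(z) = prod_i (pi_{A_i}.nu)(pi_{A_i} z) *)
Definition marginal_at (A : {set 'I_n}) (nu : Xspace -> R) (z : Xspace) : R :=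
  \sum_(w : Xspace | [forall s in A, w s == z s]) nu w.
Definition recombinator (A : {set {set 'I_n}}) (nu : Xspace -> R) : Xspace -> R :=
  fun z => \prod_(B <- blocks A) marginal_at B nu z.

Definition recomb_field (rho : {set {set 'I_n}} -> R) (om : Xspace -> R)
    : Xspace -> R :=
  fun z => \sum_(A : {set {set 'I_n}} | is_partition A)
             rho A * (recombinator A om z - om z).

(* the product state  |_|_{i} pi_{C_i}(x^{(i+j-1)})  (0-based: index i+j mod k) *)
Definition recomb_point (C : {set {set 'I_n}}) (k : nat) (xs : {ffun 'I_k -> Xspace})
    (j : 'I_k) : Xspace :=
  [ffun s : 'I_n => xs (cyc j (bidx C s)) s].

Definition mass_action_field (rho : {set {set 'I_n}} -> R) (om : Xspace -> R)
    : Xspace -> R :=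
  fun z => \sum_(C : {set {set 'I_n}} | is_partition C)
    \sum_(xs : {ffun 'I_(nblocks C) -> Xspace})
      (rho C / (nblocks C)%:R) * (\prod_(i < nblocks C) om (xs i)) *
      \sum_(j < nblocks C)
        (dirac_vec (recomb_point C xs j) z - dirac_vec (xs j) z).

Definition is_prob (om : Xspace -> R) : Prop :=
  (forall z, 0 <= om z) /\ \sum_z om z = 1.

End Recomb.

(* Main.v *)
Require Import Defs.
From HB Require Import structures.
From mathcomp Require Import all_boot all_order all_algebra.
From mathcomp Require Import all_classical all_reals all_analysis.
Import Order.TTheory GRing.Theory Num.Theory.
Local Open Scope ring_scope.
Set Implicit Arguments. Unset Strict Implicit. Unset Printing Implicit Defensive.

Module Helpers.
Section Blk.
Variables (n : nat) (C : {set {set 'I_n}}).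
Hypothesis HC : is_partition C.

Lemma covT s : s \in finset.cover C.
Proof. by move: HC; rewrite /is_partition => /and3P [/eqP -> _ _]; rewrite inE. Qed.

Lemma trivC : finset.trivIset C.
Proof. by move: HC; rewrite /is_partition => /and3P []. Qed.

Lemma pblock_in_blocks s : finset.pblock C s \in blocks C.
Proof.
have Hs : s \in finset.pblock C s by rewrite mem_pblock covT.
case: (arg_minnP (fun i : 'I_n => val i) Hs) => i Hi Hmin.
have E : finset.pblock C i = finset.pblock C s.
  by apply/eqP; rewrite eq_sym eq_pblock ?covT // ; apply: trivC.
apply/mapP; exists i; last by rewrite E.
rewrite mem_filter mem_enum andbT; apply/forallP => j; apply/implyP.
by rewrite E => /Hmin.
Qed.

Lemma mem_blocks_iff B s : B \in blocks C -> (s \in B) = (finset.pblock C s == B).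
Proof.
case/mapP => i _ ->.
by rewrite eq_sym eq_pblock ?covT //; apply: trivC.
Qed.

Lemma blocks_uniq : uniq (blocks C).
Proof.
rewrite map_inj_in_uniq; first by apply: filter_uniq; apply: (enum_uniq 'I_n).
move=> i j; rewrite !mem_filter => /andP [/forallP Hi _] /andP [/forallP Hj _] E.
have ij : i \in finset.pblock C j by rewrite -E mem_pblock covT.
have ji : j \in finset.pblock C i by rewrite E mem_pblock covT.
have := implyP (Hi j) ji; have := implyP (Hj i) ij => a b.
by apply/val_inj/eqP; rewrite eqn_leq a b.
Qed.

Lemma bidx_lt s : (bidx C s < nblocks C)%N.
Proof. by rewrite /bidx /nblocks index_mem pblock_in_blocks. Qed.

Lemma bidx_set (b : nat) : (b < nblocks C)%N ->
  [set s | bidx C s == b] = nth finset.set0 (blocks C) b.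
Proof.
move=> hb; apply/setP => s; rewrite inE mem_blocks_iff ?mem_nth //.
rewrite /bidx; apply/eqP/eqP => [<-|->]; first by rewrite nth_index // pblock_in_blocks.
by rewrite index_uniq // blocks_uniq.
Qed.

End Blk.
Section Alg.
Variables (n : nat) (Xs : 'I_n -> finType) (R : realType).

Lemma lemA k (j : 'I_k) (om : Xspace Xs -> R) z : \sum_w om w = 1 ->
  \sum_(xs : {ffun 'I_k -> Xspace Xs}) (\prod_i om (xs i)) * dirac_vec R (xs j) z = om z.
Proof.
move=> H1.
transitivity (\sum_(xs : {ffun 'I_k -> Xspace Xs})
   \prod_i (om (xs i) * (if i == j then (z == xs i)%:R else 1))).
  apply: eq_bigr => xs _; rewrite big_split /=; congr (_ * _).
  by rewrite (bigD1 j) //= eqxx big1 ?mulr1 // => i /negbTE ->.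
rewrite -(bigA_distr_bigA (fun i (x : Xspace Xs) => om x * (if i == j then (z == x)%:R else 1))) (bigD1 j) //= [\prod_(i < k | i != j) _]big1; last first.
  move=> i /negbTE hi.
  by under eq_bigr do rewrite hi mulr1; exact: H1.
  rewrite eqxx mulr1 (bigD1 z) //= eqxx mulr1 big1 ?addr0 // => x /negbTE.
  by rewrite eq_sym => ->; rewrite mulr0.
Qed.

Lemma lemB k (p : 'I_n -> 'I_k) (om : Xspace Xs -> R) z :
  \sum_(xs : {ffun 'I_k -> Xspace Xs}) (\prod_i om (xs i)) *
      dirac_vec R ([ffun s => xs (p s) s] : Xspace Xs) z =
  \prod_i marginal_at [set s | p s == i] om z.
Proof.
transitivity (\sum_(xs : {ffun 'I_k -> Xspace Xs})
   \prod_i (om (xs i) * ([forall s in [set s | p s == i], xs i s == z s])%:R)).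
  apply: eq_bigr => xs _; rewrite big_split /=; congr (_ * _).
  rewrite /dirac_vec; case: eqP => [->|Hne].
    rewrite big1 // => i _; case: forallP => // [[]] s; apply/implyP.
    by rewrite inE ffunE => /eqP ->.
  case/boolP: [exists s, z s != xs (p s) s] => [/existsP [s Hs] | /existsPn H].
    rewrite (bigD1 (p s)) //=; case: forallP => [H|]; last by rewrite mul0r.
    by move: (implyP (H s)); rewrite inE eqxx eq_sym (negbTE Hs) => /(_ isT).
  exfalso; apply: Hne; apply/ffunP => s; rewrite ffunE; apply/eqP.
  by move: (H s); rewrite negbK.
rewrite -(bigA_distr_bigA (fun i (x : Xspace Xs) => om x * ([forall s in [set s | p s == i], x s == z s])%:R)); apply: eq_bigr => i _.
rewrite /marginal_at [RHS]big_mkcond; apply: eq_bigr => x _.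
by case: ifP; rewrite ?mulr1 ?mulr0.
Qed.

Lemma cyc_eq k (j : 'I_k) m1 m2 : (m1 < k)%N -> (m2 < k)%N ->
  (cyc j m1 == cyc j m2) = (m1 == m2).
Proof.
move=> h1 h2; rewrite -val_eqE /= eqn_modDr !modn_small //.
Qed.

Lemma lemC (C : {set {set 'I_n}}) (HC : is_partition C) (j : 'I_(nblocks C)) (om : Xspace Xs -> R) z :
  \prod_(i < nblocks C) marginal_at [set s | cyc j (bidx C s) == i] om z =
  recombinator C om z.
Proof.
have hinj : injective (fun b : 'I_(nblocks C) => cyc j b).
  by move=> a b /eqP; rewrite cyc_eq // => /eqP /val_inj.
rewrite (reindex_inj hinj) /=.
rewrite /recombinator /= [RHS](big_nth (finset.set0 : {set 'I_n})) big_mkord; apply: eq_bigr => b _.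
rewrite -bidx_set //; congr marginal_at; apply/setP => s.
by rewrite !inE cyc_eq // bidx_lt.
Qed.

End Alg.
Section Main.
Variables (n : nat) (Xs : 'I_n -> finType) (R : realType).

Lemma perC (C : {set {set 'I_n}}) (HC : is_partition C) (c : R) (om : Xspace Xs -> R) z :
  \sum_w om w = 1 ->
  \sum_(xs : {ffun 'I_(nblocks C) -> Xspace Xs})
      (c / (nblocks C)%:R) * (\prod_(i < nblocks C) om (xs i)) *
      \sum_(j < nblocks C)
        (dirac_vec R (recomb_point C xs j) z - dirac_vec R (xs j) z)
  = c * (recombinator C om z - om z).
Proof.
move=> H1.
under eq_bigr do rewrite mulr_sumr.
rewrite exchange_big /=.
under eq_bigr => j _.
  under eq_bigr do rewrite -mulrA mulrBr mulrBr.
  rewrite sumrB -!mulr_sumr -mulrBr.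
  rewrite lemA //.
  rewrite /recomb_point lemB lemC //.
  over.
rewrite sumr_const card_ord.
case: (posnP (nblocks C)) => [k0|kp].
  rewrite k0 mulr0n.
  have nI : 'I_n -> False.
    move=> s; have := pblock_in_blocks HC s.
    by move: k0; rewrite /nblocks; case: (blocks C).
  have -> : recombinator C om z = 1.
    by rewrite /recombinator; move: k0; rewrite /nblocks; case: (blocks C) => // _; rewrite big_nil.
  have -> : om z = 1.
    rewrite -H1 (bigD1 z) //= big1 ?addr0 // => w /negP [].
    by apply/eqP/ffunP => s; case: (nI s).
  by rewrite subrr mulr0.
rewrite -[LHS]mulr_natr mulrAC divfK //.
by rewrite pnatr_eq0 -lt0n.
Qed.

End Main.
End Helpers.
Import Helpers.
Theorem theorem3p3 (n : nat) (Xs : 'I_n -> finType) (R : realType)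
    (rho : {set {set 'I_n}} -> R)
    (rho_ge0 : forall C, is_partition C -> 0 <= rho C)
    (om : R -> Xspace Xs -> R)
    (om_prob : forall t : R, 0 <= t -> is_prob (om t)) :
  (forall t : R, 0 <= t -> forall z,
      is_derive t 1 (fun s : R => om s z) (recomb_field rho (om t) z)) <->
  (forall t : R, 0 <= t -> forall z,
      is_derive t 1 (fun s : R => om s z) (mass_action_field rho (om t) z)).
Proof.
have E : forall t : R, 0 <= t -> forall z,
    recomb_field rho (om t) z = mass_action_field rho (om t) z.
  move=> t t0 z; rewrite /recomb_field /mass_action_field.
  apply: eq_bigr => C HC; rewrite perC //.
  by case: (om_prob t t0).
by split => H t t0 z; [rewrite -(E t t0) | rewrite (E t t0)]; apply: H.
Qed.
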